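(* Let $G$ be a graph and $D\subseteq V(G)$ such that $V(G)\setminus D$ is a finite set of vertices of finite degree. Let $c:D\to\{0,1\}$ be a coloring of the induced subgraph $G[D]$ which is strongly maximal (in all of $D$, as a coloring of $G[D]$). Then every extension $\tilde c:V(G)\to\{0,1\}$ of $c$ is almost strongly maximal in $D$ (as a coloring of $G$).
   Context: Graphs are simple, undirected, possibly infinite; degree of $v$ is $|N(v)|$; $G[D]$ is the induced subgraph. A coloring of a graph $\Gamma$ is a map $V(\Gamma)\to\{0,1\}$. $\mathit{trans}(c)=\{uv\in E(\Gamma):c(u)\neq c(v)\}$; $c*F$ differs from $c$ exactly on $F$; for finite $F$ consisting of vertices of finite degree, $\mathit{dtrans}(c,F)=|\mathit{trans}(c)\setminus\mathit{trans}(c*F)|-|\mathit{trans}(c*F)\setminus\mathit{trans}(c)|$. $c$ is strongly maximal in $A$ if $\mathit{dtrans}(c,F)\ge0$ for every finite $F\subseteq A$ consisting of vertices of finite degree. Colorings $c,c'$ are close in $A$ if $c\triangle c'=\{v:c(v)\neq c'(v)\}$ is finite, consists of vertices of finite degree, and is contained in $A$. $c$ is almost strongly maximal in $A$ if it is close in $A$ to a coloring strongly maximal in $A$. *)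

(* Defs.v *)
From HB Require Import structures.
From mathcomp Require Import all_boot all_order all_algebra.
From mathcomp Require Import boolp classical_sets cardinality.
From mathcomp Require Import finmap.
Set Implicit Arguments. Unset Strict Implicit. Unset Printing Implicit Defensive.
Import Order.TTheory GRing.Theory Num.Theory.
Local Open Scope classical_set_scope.

Definition simple_graph (V : Type) (adj : V -> V -> Prop) : Prop :=
  (forall u v, adj u v -> adj v u) /\ (forall v, ~ adj v v).

(* induced subgraph G[D], on the same vertex type (vertices outside D isolated) *)
Definition induced (V : Type) (adj : V -> V -> Prop) (D : set V) : V -> V -> Prop :=
  fun u v => D u /\ D v /\ adj u v.

Definition nbhd (V : Type) (adj : V -> V -> Prop) (v : V) : set V := [set u | adj v u].

Definition fin_deg (V : Type) (adj : V -> V -> Prop) (v : V) : Prop :=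
  finite_set (nbhd adj v).

Definition flip (V : Type) (c : V -> bool) (F : set V) : V -> bool :=
  fun v => if `[< F v >] then ~~ c v else c v.

(* edges as unordered pairs {u,v} *)
Definition trans (V : Type) (adj : V -> V -> Prop) (c : V -> bool) : set (set V) :=
  [set e | exists u v, [/\ adj u v, c u != c v & e = [set u] `|` [set v]]].

Definition dtrans (V : choiceType) (adj : V -> V -> Prop) (c : V -> bool)
  (F : set V) : int :=
  ((#|` fset_set (trans adj c `\` trans adj (flip c F))|)%:Z
   - (#|` fset_set (trans adj (flip c F) `\` trans adj c)|)%:Z)%R.

Definition strongly_maximal (V : choiceType) (adj : V -> V -> Prop) (A : set V)
  (c : V -> bool) : Prop :=
  forall F : set V, finite_set F -> F `<=` A -> (forall v, F v -> fin_deg adj v) ->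
    (0 <= dtrans adj c F)%R.

Definition close (V : Type) (adj : V -> V -> Prop) (A : set V) (c c' : V -> bool) : Prop :=
  [/\ finite_set [set v | c v != c' v],
      [set v | c v != c' v] `<=` A &
      forall v, c v != c' v -> fin_deg adj v].

Definition almost_strongly_maximal (V : choiceType) (adj : V -> V -> Prop) (A : set V)
  (c : V -> bool) : Prop :=
  exists c', close adj A c c' /\ strongly_maximal adj A c'.

(* Main.v *)
Require Import Defs.
From HB Require Import structures.
From mathcomp Require Import all_boot all_order all_algebra.
From mathcomp Require Import boolp classical_sets cardinality.
From mathcomp Require Import finmap zify.
Set Implicit Arguments. Unset Strict Implicit. Unset Printing Implicit Defensive.
Import Order.TTheory GRing.Theory Num.Theory.
Local Open Scope classical_set_scope.

Lemma splitc (T : choiceType) (S B : set T) : finite_set S ->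
  #|` fset_set S| = (#|` fset_set (S `\` B)| + #|` fset_set (S `&` B)|)%N.
Proof.
move=> fS; have fSB : finite_set (S `&` B) by apply: finite_setIl.
have -> : S `\` B = S `\` (S `&` B) by apply/seteqP; split=> x /=; tauto.
rewrite fset_setD // -(cardfsID (fset_set (S `&` B)) (fset_set S)) addnC.
congr (_ + _)%N; congr (#|` _|); apply/fsetIidPr.
by rewrite -fset_set_sub // => x [].
Qed.

Lemma keyl (T : choiceType) (A B E : set T) : finite_set E ->
  A `\` B `<=` E -> B `\` A `<=` E ->
  ((#|` fset_set (A `\` B)|)%:Z - (#|` fset_set (B `\` A)|)%:Z =
   (#|` fset_set (A `&` E)|)%:Z - (#|` fset_set (B `&` E)|)%:Z)%R.
Proof.
move=> fE sA sB.
rewrite (splitc B (finite_setIr A fE)) (splitc A (finite_setIr B fE)).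
have -> : (A `&` E) `\` B = A `\` B.
  apply/seteqP; split=> x /=; first tauto.
  move=> [Ax nBx]; split=> //; split=> //; exact: sA.
have -> : (B `&` E) `\` A = B `\` A.
  apply/seteqP; split=> x /=; first tauto.
  move=> [Ax nBx]; split=> //; split=> //; exact: sB.
have -> : (B `&` E) `&` A = (A `&` E) `&` B.
  by apply/seteqP; split=> x /=; tauto.
lia.
Qed.

Definition inc (V : Type) (adj : V -> V -> Prop) (S : set V) : set (set V) :=
  [set e | exists u v, [/\ adj u v, S u & e = [set u] `|` [set v]]].

Lemma inc_fin (V : Type) (adj : V -> V -> Prop) (S : set V) :
  finite_set S -> (forall v, S v -> fin_deg adj v) -> finite_set (inc adj S).
Proof.
move=> fS fd.
apply: (@sub_finite_set _ _ (\bigcup_(u in S) ((fun v => [set u] `|` [set v]) @` nbhd adj u))).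
  by move=> e [u [v [auv Su ->]]]; exists u => //; exists v.
by apply: bigcup_finite => // u Su; apply: finite_image; apply: fd.
Qed.

Lemma diff_inc (V : Type) (adj R : V -> V -> Prop) (S : set V) (d1 d2 : V -> bool) :
  simple_graph adj -> (forall u v, R u v -> adj u v) ->
  (forall x, ~ S x -> d1 x = d2 x) ->
  trans R d1 `\` trans R d2 `<=` inc adj S.
Proof.
move=> [sym _] HR agr e [[u [v [Ruv duv ->]]] nT].
have [Su|nSu] := pselect (S u); first by exists u, v; split => //; apply: HR.
have [Sv|nSv] := pselect (S v).
  by exists v, u; split => //; [apply: sym; apply: HR | rewrite setUC].
exfalso; apply: nT; exists u, v; split => //.
by rewrite -!agr.
Qed.

Lemma flip_out (V : Type) (d : V -> bool) (F : set V) x : ~ F x -> flip d F x = d x.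
Proof. by rewrite /flip; case: asboolP. Qed.

Lemma flip_in (V : Type) (d : V -> bool) (F : set V) x : F x -> flip d F x = ~~ d x.
Proof. by rewrite /flip; case: asboolP. Qed.

Lemma dtransE (V : choiceType) (adj R : V -> V -> Prop) (S : set V) (d1 d2 : V -> bool)
  (F : set V) :
  simple_graph adj -> (forall u v, R u v -> adj u v) ->
  finite_set S -> (forall v, S v -> fin_deg adj v) ->
  (forall x, ~ S x -> d1 x = d2 x) -> flip d1 F = d2 ->
  dtrans R d1 F = ((#|` fset_set (trans R d1 `&` inc adj S)|)%:Z -
                   (#|` fset_set (trans R d2 `&` inc adj S)|)%:Z)%R.
Proof.
move=> sg HR fS fd agr Hd; subst d2; rewrite /dtrans; apply: keyl.
- exact: inc_fin.
- by apply: diff_inc => // x /agr ->.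
- by apply: diff_inc => // x /agr ->.
Qed.

Theorem corollary2p5 (V : choiceType) (adj : V -> V -> Prop) (D : set V) :
  simple_graph adj ->
  finite_set (~` D) ->
  (forall v, ~ D v -> fin_deg adj v) ->
  forall c : V -> bool,
    strongly_maximal (induced adj D) D c ->
    forall ct : V -> bool, (forall v, D v -> ct v = c v) ->
      almost_strongly_maximal adj D ct.
Proof.
move=> sg fnD fdnD c smc ct ect.
have [sym irr] := sg.
pose adm := fun F : set V => [/\ finite_set F, F `<=` D & forall v, F v -> fin_deg adj v].
pose X := inc adj (~` D).
have fX : finite_set X by apply: inc_fin.
pose nX := #|` fset_set X|.
have HRi : forall u v, induced adj D u v -> adj u v by move=> u v [_ [_]].
have HRa : forall u v : V, adj u v -> adj u v by [].
have bound : forall F, adm F -> (- (nX%:Z) <= dtrans adj ct F)%R.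
  move=> F [fF FD fdF].
  pose E := inc adj F.
  have fE : finite_set E by apply: inc_fin.
  rewrite (@dtransE _ adj adj F ct (flip ct F) F) //; last first.
    by move=> x nF; rewrite flip_out.
  have fdi : forall v, F v -> fin_deg (induced adj D) v.
    move=> v Fv; apply: sub_finite_set (fdF v Fv) => u [_ [_ h]] //.
  have := smc F fF FD fdi.
  rewrite (@dtransE _ adj (induced adj D) F c (flip c F) F) //; last first.
    by move=> x nF; rewrite flip_out.
  have le1 : (#|` fset_set (trans (induced adj D) c `&` E)| <=
              #|` fset_set (trans adj ct `&` E)|)%N.
    apply: fsubset_leq_card; rewrite -fset_set_sub; try exact: finite_setIr.
    move=> e [[u [v [[Du [Dv auv]] cuv ->]]] Ee]; split=> //; exists u, v; split=> //.
    by rewrite !ect.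
  have le2 : (#|` fset_set (trans adj (flip ct F) `&` E)| <=
      #|` fset_set (trans (induced adj D) (flip c F) `&` E)| + nX)%N.
    apply: (@leq_trans #|` fset_set ((trans (induced adj D) (flip c F) `&` E) `|` X)|).
      apply: fsubset_leq_card; rewrite -fset_set_sub; last first.
      - by rewrite finite_setU; split => //; exact: finite_setIr.
      - exact: finite_setIr.
      move=> e [[u [v [auv fuv ->]]] Ee].
      case: (pselect (D u)) => Du; last by right; exists u, v.
      case: (pselect (D v)) => Dv; last first.
        by right; exists v, u; split=> //; [apply: sym | rewrite setUC].
      left; split=> //; exists u, v; split => //.
      by move: fuv; rewrite /flip !ect.
    rewrite fset_setU //; last exact: finite_setIr.
    have := cardfsUI (fset_set (trans (induced adj D) (flip c F) `&` E)) (fset_set X).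
    rewrite -/nX; lia.
  rewrite /E in le1 le2; lia.
pose P := fun n : nat => exists F, adm F /\ (nX%:Z + dtrans adj ct F = n%:Z)%R.
have adm0 : adm set0 by split => //; apply: finite_set0.
have exb : exists n, `[< P n >].
  exists (absz (nX%:Z + dtrans adj ct set0)%R); apply/asboolP; exists set0; split => //.
  by rewrite gez0_abs //; have := bound _ adm0; lia.
case: (ex_minnP exb) => n /asboolP [F0 [aF0 eq0]] minn.
have opt : forall F, adm F -> (dtrans adj ct F0 <= dtrans adj ct F)%R.
  move=> F aF; have := bound F aF => bF.
  have := minn (absz (nX%:Z + dtrans adj ct F)%R).
  have -> : `[< P (absz (nX%:Z + dtrans adj ct F)%R) >] = true.
    apply/asboolP; exists F; split => //; rewrite gez0_abs //; lia.
  move=> /(_ isT) hn.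
  have : (n%:Z <= `|(nX%:Z + dtrans adj ct F)%R|%N%:Z)%R by rewrite lez_nat.
  rewrite gez0_abs; [lia | lia].
case: aF0 => fF0 F0D fdF0.
exists (flip ct F0); split.
  have eqs : [set v | ct v != flip ct F0 v] = F0.
    apply/seteqP; split=> x /=.
      by case: (pselect (F0 x)) => // h; rewrite flip_out // eqxx.
    by move=> h; rewrite flip_in //; case: (ct x).
  split; [by rewrite eqs | by rewrite eqs |].
  by move=> v h; apply: fdF0; have : [set v | ct v != flip ct F0 v] v by []; rewrite eqs.
move=> F fF FD fdF.
pose H := (F0 `\` F) `|` (F `\` F0).
have aH : adm H.
  split.
  - by rewrite finite_setU; split; apply: finite_setD.
  - by move=> x [[h _]|[h _]]; [apply: F0D | apply: FD].
  - by move=> x [[h _]|[h _]]; [apply: fdF0 | apply: fdF].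
pose S := F0 `|` F.
have fS : finite_set S by rewrite finite_setU.
have fdS : forall v, S v -> fin_deg adj v by move=> v [h|h]; [apply: fdF0|apply: fdF].
have fl : flip (flip ct F0) F = flip ct H.
  apply/funext => x; rewrite /flip.
  case: (asboolP (F0 x)) => h0; case: (asboolP (F x)) => h1;
    case: (asboolP (H x)) => hH; rewrite ?negbK //; exfalso; move: hH; rewrite /H /=; tauto.
rewrite (@dtransE _ adj adj S (flip ct F0) (flip ct H) F sg HRa fS fdS _ fl); last first.
  move=> x; rewrite /S /= => nS.
  have n0 : ~ F0 x by tauto.
  have nH : ~ H x by rewrite /H /=; tauto.
  by rewrite !flip_out.
have e1 := @dtransE _ adj adj S ct (flip ct F0) F0 sg HRa fS fdS _ erefl.
have e2 := @dtransE _ adj adj S ct (flip ct H) H sg HRa fS fdS _ erefl.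
have := opt H aH.
rewrite e1 ?e2.
- lia.
- move=> x; rewrite /S /= => nS.
  have nH : ~ H x by rewrite /H /=; tauto.
  by rewrite flip_out.
- move=> x; rewrite /S /= => nS.
  have n0 : ~ F0 x by tauto.
  by rewrite flip_out.
Qed.
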